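(* Let $G=(V,E)$ be an undirected graph with $n$ vertices and a priori maximum vertex degree $\Delta$, and let $\pi$ be a uniformly random ordering of $V$. Run the modified parallel MIS procedure (described in the context) on $(G,\pi)$, choosing in the $i$-th round a prefix parameter $\delta=\Omega(2^i\log(n)/\Delta)$ (i.e., $\delta\ge c\,2^i\log(n)/\Delta$ for a sufficiently large constant $c$). Then, with high probability, after the $i$-th round all remaining vertices have degree at most $\Delta/2^i$ in the remaining graph.
   Context: For an ordered vertex set $V$ and $0<\delta\le1$, the $\delta$-prefix $P(V,\pi,\delta)$ is the set of the $\delta|V|$ earliest vertices of $V$ in $\pi$. For a vertex set $U$, $N(U)$ is the set of neighbors of vertices of $U$ and $G[U]$ the induced subgraph. The lexicographically first MIS of a graph with respect to $\pi$ is the output of the sequential greedy algorithm that repeatedly adds the first remaining vertex in order $\pi$ and deletes it and its neighbors. The modified parallel MIS procedure on $(G=(V,E),\pi)$: if $V=\emptyset$ return $\emptyset$; otherwise choose a prefix parameter $\delta$ (possibly depending on the current graph), let $P=P(V,\pi,\delta)$, let $W$ be the lexicographically first MIS of $G[P]$ with respect to $\pi$, set $V'=V\setminus(P\cup N(W))$, and return $W$ together with the result of recursing on $(G[V'],\pi)$. Each recursive call is a round. ''With high probability'' means with probability at least $1-1/n^{c'}$ for any constant $c'$ (affecting the constants in the asymptotic notation), where $n$ is the original number of vertices. *)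

(* Defs.v *)
From HB Require Import structures.
From mathcomp Require Import all_boot all_order all_fingroup all_algebra.
From mathcomp Require Import all_classical all_reals.
From mathcomp Require Import exp.
Set Implicit Arguments. Unset Strict Implicit. Unset Printing Implicit Defensive.
Import Order.TTheory GRing.Theory Num.Theory.

Definition simple_graph (V : finType) (e : rel V) : Prop :=
  symmetric e /\ irreflexive e.

Section MIS.
Variables (V : finType) (e : rel V).

(* The ordering pi of V, given by a permutation: rank of v is its position. *)
Definition rank (pi : {perm V}) (v : V) : nat := enum_rank (pi v).

Definition nbrs_in (U : {set V}) (v : V) : {set V} := [set u in U | e v u].

Definition deg_in (U : {set V}) (v : V) : nat := #|nbrs_in U v|.

Definition nbrs_set (W : {set V}) : {set V} := [set u | [exists w in W, e w u]].

Fixpoint greedy_fuel (pi : {perm V}) (fuel : nat) (U : {set V}) : {set V} :=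
  match fuel with
  | 0 => finset.set0
  | k.+1 =>
      match [pick v in U | [forall u in U, rank pi v <= rank pi u]] with
      | None => finset.set0
      | Some v => v |: greedy_fuel pi k (U :\: (v |: nbrs_in U v))
      end
  end.

(* lexicographically first MIS of G[U] w.r.t. pi (#|V| steps always suffice) *)
Definition lfmis (pi : {perm V}) (U : {set V}) : {set V} :=
  greedy_fuel pi #|V| U.

(* delta-prefix of U: the vertices of U whose position (0-based) among U in the
   order pi is < delta * |U|, i.e. the ceil(delta |U|) earliest vertices. *)
Definition prefix (R : realType) (U : {set V}) (pi : {perm V}) (delta : R)
  : {set V} :=
  [set v in U | ((#|[set u in U | (rank pi u < rank pi v)%N]|)%:R < delta * (#|U|)%:R)%R].

Definition round_step (R : realType) (pi : {perm V}) (delta : R) (U : {set V})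
  : {set V} :=
  let P := prefix U pi delta in
  let W := lfmis pi P in
  U :\: (P :|: nbrs_set W).

(* remaining vertex set after j rounds; round j (1-indexed) uses the prefix
   parameter [delta j U] where U is the current vertex set. *)
Fixpoint remaining (R : realType) (pi : {perm V}) (delta : nat -> {set V} -> R)
  (j : nat) : {set V} :=
  match j with
  | 0 => finset.setT
  | k.+1 => let U := remaining pi delta k in round_step pi (delta k.+1 U) U
  end.

End MIS.

(* Main.v *)
Require Import Defs.
From HB Require Import structures.
From mathcomp Require Import all_boot all_order all_fingroup all_algebra.
From mathcomp Require Import all_classical all_reals.
From mathcomp Require Import exp.
Import Order.TTheory GRing.Theory Num.Theory.
From mathcomp Require Import sequences.
From mathcomp Require Import zify.
From mathcomp Require Import ring.
From mathcomp Require Import eqtype ssrnat seq fintype finset bigop fingroup perm.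
Import Order.TTheory GRing.Theory Num.Theory.
Set Implicit Arguments. Unset Strict Implicit. Unset Printing Implicit Defensive.

Section Greedy.
Variables (V : finType) (e : rel V).
Hypothesis esym : symmetric e.
Hypothesis eirr : irreflexive e.

Lemma rank_inj (p : {perm V}) : injective (rank p).
Proof. rewrite /rank => x y H; apply: (@perm_inj _ p); apply: enum_rank_inj; exact: val_inj H. Qed.

Lemma rank_mul (r p : {perm V}) u : rank (r * p)%g u = rank p (r u).
Proof. by rewrite /rank permM. Qed.

Lemma greedy_set0 p f : greedy_fuel e p f set0 = set0.
Proof.
case: f => //= f; case: pickP => // v; by rewrite inE.
Qed.

Lemma greedy_sub p f X : greedy_fuel e p f X \subset X.
Proof.
elim: f X => [|f IH] X /=; first by rewrite sub0set.
case: pickP => [v /andP[vX _]|_]; last by rewrite sub0set.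
rewrite subUset sub1set vX /=; apply: subset_trans (IH _) _.
by rewrite subDset subsetUr.
Qed.

Lemma greedy_ext (p1 p2 : {perm V}) f (X : {set V}) :
  {in X, rank p1 =1 rank p2} ->
  greedy_fuel e p1 f X = greedy_fuel e p2 f X.
Proof.
elim: f X => [|f IH] X //= H.
have -> : [pick v in X | [forall u in X, rank p1 v <= rank p1 u]] =
          [pick v in X | [forall u in X, rank p2 v <= rank p2 u]].
  apply: eq_pick => v /=; case vX: (v \in X) => //=.
  apply: eq_forallb => u; case uX: (u \in X) => //=.
  by rewrite !H.
case: pickP => // v _; congr (_ |: _); apply: IH => u.
by rewrite !inE => /andP[_ /H].
Qed.

Lemma lfmis_ext (p1 p2 : {perm V}) (X : {set V}) :
  {in X, rank p1 =1 rank p2} -> lfmis e p1 X = lfmis e p2 X.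
Proof. exact: greedy_ext. Qed.

Lemma greedy_max p f (X : {set V}) x : x \in X ->
  (forall y, y \in X -> y != x -> rank p y < rank p x) -> #|X| <= f ->
  greedy_fuel e p f X = greedy_fuel e p f (X :\ x) :|:
     (if x \in nbrs_set e (greedy_fuel e p f (X :\ x)) then set0 else [set x]).
Proof.
elim: f X => [|f IH] X xX Hmax Hc.
  by move: Hc; rewrite leqn0 => /eqP/cards0_eq X0; rewrite X0 inE in xX.
have [v vmin] : exists v, [pick v in X | [forall u in X, rank p v <= rank p u]] = Some v.
  case: pickP => [v _|H]; first by exists v.
  have [w wX wmin] := arg_minnP (rank p) xX.
  have wX' : w \in X by [].
  move: (H w); rewrite wX' /=; move/negP; case; apply/forallP => u.
  by apply/implyP => /wmin.
have [vX wmin] : v \in X /\ [forall u in X, rank p v <= rank p u].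
  by case: pickP vmin => // w /andP[wX wmin] [<-].
have eqX : greedy_fuel e p f.+1 X = v |: greedy_fuel e p f (X :\: (v |: nbrs_in e X v)).
  by rewrite /= vmin.
case: (eqVneq v x) => [vx|vx].
  subst v.
  have Xx : X :\ x = set0.
    apply/setP => y; rewrite !inE; case: eqP => //= yx; apply/negP => yX.
    have := Hmax _ yX (introN eqP yx); move/forallP: wmin => /(_ y).
    by rewrite yX /= leqNgt => /negbTE ->.
  rewrite Xx greedy_set0 eqX.
  have -> : X :\: (x |: nbrs_in e X x) = set0.
    apply/eqP; rewrite -subset0 -Xx; apply/subsetP => y; rewrite !inE.
    by case/andP => /norP[-> _] ->.
  rewrite greedy_set0 setU0 set0U; case: ifP => //; rewrite inE.
  by move=> /existsP[w]; rewrite inE.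
have rvx : rank p v < rank p x by apply: Hmax.
have eqXx : greedy_fuel e p f.+1 (X :\ x) =
   v |: greedy_fuel e p f ((X :\ x) :\: (v |: nbrs_in e (X :\ x) v)).
  rewrite /=.
  have -> : [pick w in X :\ x | [forall u in X :\ x, rank p w <= rank p u]] =
            [pick w in X | [forall u in X, rank p w <= rank p u]].
    apply: eq_pick => w /=; rewrite !inE.
    case: (eqVneq w x) => [->|wx] /=.
      rewrite xX /=; symmetry; apply/negP => /forallP /(_ v); rewrite vX /=.
      by rewrite leqNgt rvx.
    case wX: (w \in X) => //=; apply/idP/idP => /forallP H; apply/forallP => u;
      apply/implyP => uX.
      case: (eqVneq u x) => [->|ux]; first by apply: ltnW; apply: Hmax.
      by have := H u; rewrite !inE ux uX.
    by have := H u; move: uX; rewrite !inE => /andP[_ ->].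
  by rewrite vmin.
have eqsets : (X :\ x) :\: (v |: nbrs_in e (X :\ x) v) =
              (X :\: (v |: nbrs_in e X v)) :\ x.
  apply/setP => y; rewrite !inE.
  by case: (y == x); case: (y == v); case: (y \in X); case: (e v y).
have nbU1 A y : (y \in nbrs_set e (v |: A)) = e v y || (y \in nbrs_set e A).
  rewrite !inE; apply/existsP/orP => [[w]|[evy|/existsP[w wA]]].
    by rewrite !inE => /andP[/orP[/eqP->|wA] ewy]; [left|right; apply/existsP; exists w; rewrite wA].
    by exists v; rewrite !inE eqxx evy.
  by exists w; move: wA; rewrite !inE => /andP[-> ->]; rewrite orbT.
rewrite eqX eqXx eqsets.
set X' := X :\: (v |: nbrs_in e X v).
have cX' : #|X'| <= f.
  have : #|X'| < #|X|.
    apply: proper_card; rewrite properE; apply/andP; split.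
      by apply/subsetP => y; rewrite !inE => /andP[_ ->].
    apply/subsetPn; exists v => //; by rewrite !inE eqxx.
  by move=> H; rewrite -ltnS; apply: leq_trans H Hc.
case xX': (x \in X').
  have evx : ~~ e v x by apply: contraTN xX' => evx; rewrite !inE xX evx !orbT.
  rewrite (IH X' xX' _ cX'); last first.
    by move=> y; rewrite !inE => /andP[_ yX] yx; apply: Hmax.
  by rewrite nbU1 (negbTE evx) /= setUA.
have evx : e v x.
  apply: contraFT xX' => nevx; rewrite !inE xX (negbTE nevx) andbT andbF orbF.
  by rewrite eq_sym.
have -> : X' :\ x = X'.
  by apply/setP => y; rewrite !inE; case: eqP => // ->; move: xX'; rewrite !inE.
by rewrite nbU1 evx /= setU0.
Qed.

Lemma lfmis_max p (X : {set V}) x : x \in X ->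
  (forall y, y \in X -> y != x -> rank p y < rank p x) ->
  lfmis e p (X :\ x) \subset lfmis e p X /\
  (x \notin nbrs_set e (lfmis e p (X :\ x)) -> x \in lfmis e p X).
Proof.
move=> xX Hm; rewrite /lfmis (greedy_max xX Hm (max_card _)).
split; first exact: subsetUl.
by move/negbTE => ->; rewrite !inE eqxx orbT.
Qed.

Definition cnt (U : {set V}) (p : {perm V}) u := #|[set w in U | rank p w < rank p u]|.
Definition Pre (U : {set V}) (p : {perm V}) t := [set u in U | cnt U p u < t].
Definition Ls (U : {set V}) (p : {perm V}) t := U :\: (Pre U p t :|: nbrs_set e (lfmis e p (Pre U p t))).

Lemma cnt_lt (U : {set V}) p u w : u \in U -> rank p u < rank p w -> cnt U p u < cnt U p w.
Proof.
move=> uU ruw; apply: proper_card; rewrite properE; apply/andP; split.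
  apply/subsetP => y; rewrite !inE => /andP[-> ry] /=; exact: ltn_trans ry ruw.
by apply/subsetPn; exists u; rewrite !inE uU ?ltnn.
Qed.

Lemma cnt_ltm (U : {set V}) p u : u \in U -> cnt U p u < #|U|.
Proof.
move=> uU; apply: proper_card; rewrite properE; apply/andP; split.
  by apply/subsetP => y; rewrite !inE => /andP[->].
by apply/subsetPn; exists u => //; rewrite !inE ltnn andbF.
Qed.

Lemma cnt_inj (U : {set V}) p u w : u \in U -> w \in U -> cnt U p u = cnt U p w -> u = w.
Proof.
move=> uU wU H; case: (ltngtP (rank p u) (rank p w)) => [l|l|]; last exact: rank_inj.
  by have := cnt_lt uU l; rewrite H ltnn.
by have := cnt_lt wU l; rewrite H ltnn.
Qed.

Lemma cnt_mul (U : {set V}) (r p : {perm V}) u : perm_on U r -> cnt U (r * p)%g u = cnt U p (r u).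
Proof.
move=> ron; rewrite /cnt -(card_imset _ (@perm_inj _ r)); apply: eq_card => y.
rewrite [in RHS]inE; apply/imsetP/andP => [[w]|[yU ry]].
  by rewrite !inE rank_mul !rank_mul => /andP[wU rw] ->; rewrite perm_closed.
exists (r^-1 y)%g; last by rewrite permKV.
by rewrite !inE !rank_mul permKV ry andbT -(perm_closed _ ron) permKV.
Qed.

Lemma cnt_surj (U : {set V}) p t : t < #|U| -> exists2 u, u \in U & cnt U p u = t.
Proof.
move=> tm.
have H : map (cnt U p) (enum U) =i iota 0 #|U|.
  apply: (uniq_min_size _ _ _).2.
  - rewrite map_inj_in_uniq ?enum_uniq // => u w; rewrite !mem_enum; exact: cnt_inj.
  - by move=> y /mapP[u]; rewrite mem_enum mem_iota add0n => /(cnt_ltm p) ?  ->.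
  by rewrite size_map size_iota -cardE.
have : t \in iota 0 #|U| by rewrite mem_iota.
by rewrite -H => /mapP[u]; rewrite mem_enum => uU ->; exists u.
Qed.


Lemma inPre (U : {set V}) p t y : (y \in Pre U p t) = (y \in U) && (cnt U p y < t).
Proof. by rewrite inE. Qed.
Lemma inLs (U : {set V}) p t y : (y \in Ls U p t) =
  [&& y \notin Pre U p t, y \notin nbrs_set e (lfmis e p (Pre U p t)) & y \in U].
Proof. by rewrite /Ls !inE negb_or andbA. Qed.
Lemma innb (A : {set V}) y : (y \in nbrs_set e A) = [exists w in A, e w y].
Proof. by rewrite inE. Qed.

Lemma Pre_sub (U : {set V}) p t : Pre U p t \subset U.
Proof. by apply/subsetP => y; rewrite inE => /andP[]. Qed.

Lemma Pre_succ (U : {set V}) p t u : u \in U -> cnt U p u = t ->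
  [/\ Pre U p t = Pre U p t.+1 :\ u, u \in Pre U p t.+1 &
      forall y, y \in Pre U p t.+1 -> y != u -> rank p y < rank p u].
Proof.
move=> uU cu; split.
- apply/setP => y; rewrite !inE.
  case: (eqVneq y u) => [->|yu] /=; first by rewrite cu ltnn andbF.
  case yU: (y \in U) => //=; rewrite ltnS [cnt U p y <= t]leq_eqVlt; case: eqP => //= cy.
  by case/negP: yu; apply/eqP; apply: (cnt_inj (p:=p) yU uU); rewrite cy cu.
- by rewrite inE uU cu ltnS leqnn.
- move=> y; rewrite inE => /andP[yU cy] yu.
  case: (ltngtP (rank p y) (rank p u)) => // [l|/rank_inj yue]; last by rewrite yue eqxx in yu.
  by have := cnt_lt uU l; rewrite cu ltnNge -ltnS cy.
Qed.

Lemma card_Pre (U : {set V}) p t : t <= #|U| -> #|Pre U p t| = t.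
Proof.
elim: t => [|t IH] tm.
  by apply/eqP; rewrite cards_eq0; apply/eqP/setP => y; rewrite !inE ltn0 andbF.
have [u uU cu] := cnt_surj p tm.
have [E1 E2 _] := Pre_succ uU cu.
by rewrite (cardsD1 u) E2 -E1 IH // ltnW.
Qed.

Lemma Ls_sub (U : {set V}) p t : Ls U p t \subset U.
Proof. by apply/subsetP => y; rewrite inE => /andP[]. Qed.

Lemma Ls_mono (U : {set V}) p t : t < #|U| -> Ls U p t.+1 \subset Ls U p t.
Proof.
move=> tm; have [u uU cu] := cnt_surj p tm.
have [E1 E2 E3] := Pre_succ uU cu.
have [L1 _] := lfmis_max E2 E3; rewrite -E1 in L1.
apply/subsetP => y; rewrite !inLs => /and3P[yP yN ->]; rewrite andbT.
apply/andP; split.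
  by apply: contra yP; rewrite !inPre => /andP[-> c] /=; rewrite ltnS ltnW.
apply: contra yN; rewrite !innb => /existsP[w /andP[wG ew]]; apply/existsP; exists w.
by rewrite (subsetP L1 _ wG).
Qed.

Lemma Ls_kill (U : {set V}) p t u v : u \in U -> cnt U p u = t ->
  u \in Ls U p t -> (u == v) || e u v -> v \notin Ls U p t.+1.
Proof.
move=> uU cu uL huv.
have [E1 E2 E3] := Pre_succ uU cu.
have [_ L2] := lfmis_max E2 E3; rewrite -E1 in L2.
have uG : u \in lfmis e p (Pre U p t.+1).
  by apply: L2; move: uL; rewrite inLs => /and3P[_ -> _].
rewrite inLs !negb_and !negbK; case/orP: huv => [/eqP <-|euv].
  by rewrite E2.
apply/orP; right; apply/orP; left; rewrite innb; apply/existsP; exists u; by rewrite uG euv.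
Qed.

End Greedy.


Lemma card_sum_bool (T : finType) (A : {set T}) (P : pred T) :
  #|[set x in A | P x]| = \sum_(x in A) (P x : nat).
Proof.
rewrite -big_mkcondr /= sum1_card; apply: eq_card => x; by rewrite inE.
Qed.

Lemma innbin (V : finType) (e : rel V) (L : {set V}) v z :
  (z \in nbrs_in e L v) = (z \in L) && e v z.
Proof. by rewrite inE. Qed.

Section Count.
Variables (R : realType) (V : finType) (e : rel V).
Hypothesis esym : symmetric e.
Variables (pi : {perm V}) (U : {set V}) (v : V) (thr : R).

Definition SU := [set r : {perm V} | perm_on U r].
Definition Eset t := [set r in SU | (v \in Ls e U (r * pi)%g t) &&
   (thr < (deg_in e (Ls e U (r * pi)%g t) v)%:R)%R].

Lemma inEset t r : (r \in Eset t) = [&& r \in SU, v \in Ls e U (r * pi)%g t &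
   (thr < (deg_in e (Ls e U (r * pi)%g t) v)%:R)%R].
Proof. by rewrite inE. Qed.

Lemma E_sub t : t < #|U| -> Eset t.+1 \subset Eset t.
Proof.
move=> tm; apply/subsetP => r; rewrite !inEset => /and3P[-> vL dL] /=.
have sL := Ls_mono e (r * pi)%g tm.
rewrite (subsetP sL _ vL) /=; apply: lt_le_trans dL _; rewrite ler_nat.
apply: subset_leq_card; apply/subsetP => z; rewrite !innbin => /andP[zL ->].
by rewrite (subsetP sL _ zL).
Qed.

Section Step.
Variables (t : nat) (a : V).
Hypotheses (aU : a \in U) (ca : cnt U pi a = t).
Definition Q := [set y in U | t <= cnt U pi y].
Definition tau y := tperm a y.

Lemma tau_on y : y \in Q -> perm_on U (tau y).
Proof.
move=> yQ; apply: subset_trans (tperm_on a y) _; apply/subsetP => z.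
rewrite !inE => /orP[]/eqP ->//; by move: yQ; rewrite inE => /andP[].
Qed.

Lemma Ls_tau r y : r \in SU -> y \in Q ->
  Ls e U ((r * tau y) * pi)%g t = Ls e U (r * pi)%g t.
Proof.
rewrite inE => ron yQ; have ton := tau_on yQ.
have rton := perm_onM ron ton.
have key w : w \in U -> (cnt U pi (tau y w) < t) = (cnt U pi w < t).
  move=> wU; rewrite /tau; case: tpermP => [->|->|_ _] //.
    by rewrite ca ltnn; move: yQ; rewrite inE => /andP[_]; rewrite ltnNge => ->.
  by rewrite ca ltnn; move: yQ; rewrite inE => /andP[_]; rewrite ltnNge => ->.
have EP : Pre U ((r * tau y) * pi)%g t = Pre U (r * pi)%g t.
  apply/setP => z; rewrite !inPre; case zU: (z \in U) => //=.
  rewrite !cnt_mul // permM key // perm_closed //.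
rewrite /Ls EP; congr (_ :\: (_ :|: nbrs_set e _)); apply: lfmis_ext => z.
rewrite inPre => /andP[zU cz]; rewrite !rank_mul permM /tau.
rewrite cnt_mul // in cz.
case: tpermP => // [rza|rzy].
  by move: cz; rewrite rza ca ltnn.
by move: cz yQ; rewrite rzy inE ltnNge => /negbTE ->; rewrite andbF.
Qed.

Lemma E_tau r y : y \in Q -> ((r * tau y)%g \in Eset t) = (r \in Eset t).
Proof.
move=> yQ; have ton := tau_on yQ.
have SUeq : ((r * tau y)%g \in SU) = (r \in SU).
  rewrite !inE; apply/idP/idP => [H|]; last by move/perm_onM; apply.
  have := perm_onM H ton; by rewrite -mulgA /tau tperm2 mulg1.
rewrite !inEset.
rewrite SUeq; case rS: (r \in SU) => //=.
by rewrite (Ls_tau rS yQ).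
Qed.


Lemma aQ : a \in Q.
Proof. by rewrite inE aU ca leqnn. Qed.

Lemma kill_count r : r \in Eset t ->
  #|[set y in Q | (r * tau y)%g \in Eset t.+1]| + deg_in e (Ls e U (r * pi)%g t) v <= #|Q|.
Proof.
rewrite inEset => /and3P[rS vL _]; move: (rS); rewrite inE => ron.
set NL := nbrs_in e (Ls e U (r * pi)%g t) v.
have sub1 : r @: NL \subset Q.
  apply/subsetP => y /imsetP[z]; rewrite innbin inLs => /andP[/and3P[zP _ zU] _] ->.
  rewrite inE perm_closed // zU /=; move: zP; rewrite inPre zU /= -leqNgt.
  by rewrite cnt_mul.
have sub2 : [set y in Q | (r * tau y)%g \in Eset t.+1] \subset Q :\: r @: NL.
  apply/subsetP => y; rewrite inE => /andP[yQ yE]; rewrite inE yQ andbT.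
  apply/imsetP => [[z zN yrz]].
  move: zN; rewrite innbin => /andP[zL evz].
  have zU : z \in U by apply: (subsetP (Ls_sub e _ _ _)) zL.
  have ton := tau_on yQ.
  have := @Ls_kill _ e U ((r * tau y) * pi)%g t z v zU.
  rewrite cnt_mul; last by apply: perm_onM.
  rewrite permM -yrz /tau tpermR ca (Ls_tau rS yQ) => /(_ erefl zL).
  rewrite esym evz orbT => /(_ erefl); move: yE; rewrite inEset => /and3P[_ -> _].
  done.
have := cardsID (r @: NL) Q; rewrite (setIidPr sub1) card_imset; last exact: perm_inj.
have := subset_leq_card sub2; rewrite /deg_in -/NL => h1 h2.
by rewrite -h2 addnC leq_add2l.
Qed.

Lemma double_count :
  #|Q| * #|Eset t.+1| <= \sum_(r in Eset t) (#|Q| - deg_in e (Ls e U (r * pi)%g t) v).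
Proof.
have H1 y : y \in Q -> #|Eset t.+1| = \sum_(r in Eset t) ((r * tau y)%g \in Eset t.+1 : nat).
  move=> yQ; rewrite -sum1_card big_mkcond /= (reindex_inj (mulIg (tau y))) /=.
  rewrite [RHS]big_mkcond /=; apply: eq_bigr => r _.
  case h: ((r * tau y)%g \in Eset t.+1); last by case: (r \in Eset t).
  have tm : t < #|U| by rewrite -ca cnt_ltm.
  by rewrite -(E_tau r yQ) (subsetP (E_sub tm) _ h).
rewrite -sum_nat_const (eq_bigr _ H1) exchange_big /=; apply: leq_sum => r rE.
rewrite -card_sum_bool; have h := kill_count rE.
rewrite leq_subRL; first by rewrite addnC.
by apply: leq_trans h; apply: leq_addl.
Qed.

End Step.

Lemma E_step_real t : (0 <= thr)%R -> t < #|U| ->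
  (#|Eset t.+1|%:R <= #|Eset t|%:R * (1 - thr / #|U|%:R) :> R)%R.
Proof.
move=> thr0 tm; have [a aU ca] := cnt_surj pi tm.
have aQ' := aQ aU ca.
set q := #|Q t|.
have qpos : 0 < q by rewrite /q card_gt0; apply/set0Pn; exists a.
have qm : q <= #|U|.
  by apply: subset_leq_card; apply/subsetP => y; rewrite inE => /andP[].
have dc := double_count aU ca.
have dle r : r \in Eset t -> deg_in e (Ls e U (r * pi)%g t) v <= q.
  move=> rE; have := kill_count aU ca rE => h.
  by apply: leq_trans h; apply: leq_addl.
have H : (q%:R * #|Eset t.+1|%:R <= #|Eset t|%:R * (q%:R - thr) :> R)%R.
  rewrite -natrM; apply: (le_trans (y := (((\sum_(r in Eset t)
     (q - deg_in e (Ls e U (r * pi)%g t) v))%N)%:R)%R)).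
    by rewrite ler_nat.
  rewrite natr_sum; apply: (le_trans (y := (\sum_(r in Eset t) (q%:R - thr : R))%R)).
    apply: ler_sum => r rE; rewrite natrB ?dle //; rewrite lerB //.
    by move: rE; rewrite inEset => /and3P[_ _ /ltW].
  by rewrite sumr_const mulrC mulr_natr.
have m0 : (0 < #|U|%:R :> R)%R by rewrite ltr0n; apply: leq_trans qpos qm.
have H2 : (q%:R - thr <= q%:R * (1 - thr / #|U|%:R) :> R)%R.
  rewrite mulrBr mulr1 lerB // mulrA ler_pdivrMr // [X in (_ <= X)%R]mulrC ler_wpM2r //.
  by rewrite ler_nat.
have q0 : (0 < q%:R :> R)%R by rewrite ltr0n.
rewrite -(ler_pM2l q0); apply: le_trans H _.
rewrite mulrCA; apply: ler_wpM2l => //.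
Qed.

Lemma E_iter t : (0 <= thr)%R -> t <= #|U| ->
  (#|Eset t|%:R <= #|SU|%:R * expR (- (thr / #|U|%:R) * t%:R) :> R)%R.
Proof.
move=> thr0; elim: t => [|t IH] tm.
  rewrite mulr0 expR0 mulr1 ler_nat; apply: subset_leq_card.
  by apply/subsetP => r; rewrite inEset => /andP[].
have := E_step_real thr0 tm; set x := (thr / #|U|%:R)%R => H.
have -> : (- x * t.+1%:R = - x * t%:R + - x :> R)%R.
  by rewrite -[t.+1]addn1 natrD mulrDr mulr1.
rewrite expRD mulrA; apply: le_trans H _.
case: (lerP 0 (1 - x)) => hx.
  apply: ler_pM => //; first by apply: IH; apply: ltnW.
  exact: expR_ge1Dx.
have h0 : (#|Eset t|%:R * (1 - x) <= 0 :> R)%R.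
  by apply: mulr_ge0_le0 => //; apply: ltW.
apply: le_trans h0 _; apply: mulr_ge0; last by apply: ltW; apply: expR_gt0.
by apply: mulr_ge0 => //; apply: ltW; apply: expR_gt0.
Qed.

End Count.


Lemma union_bound (T I : finType) (A : {set T}) (E : I -> {set T}) :
  (forall x, x \in A -> exists i, x \in E i) -> #|A| <= \sum_i #|E i|.
Proof.
move=> H; have sub : A \subset \bigcup_i E i.
  by apply/subsetP => x /H [i xi]; apply/bigcupP; exists i.
apply: leq_trans (subset_leq_card sub) _.
elim/big_rec2: _ => [|i B n _ IH]; first by rewrite cards0.
by apply: leq_trans (leq_card_setU _ _) _; rewrite leq_add2l.
Qed.

Lemma prefix_k (R : realType) (y : R) m : exists k, [/\ (k <= m)%N,
  (forall p, (p < m)%N -> (p < k)%N = (p%:R < y)%R) & ((k < m)%N -> (y <= k%:R)%R)].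
Proof.
elim: m => [|m [k [km Hk Hy]]]; first by exists 0; split.
case: (ltnP k m) => [kltm|kgem].
  exists k; split; first by apply: ltnW; rewrite ltnS ltnW.
  - move=> p; rewrite ltnS leq_eqVlt => /orP[/eqP ->|pm]; last exact: Hk.
    rewrite ltnNge (ltnW kltm) /=; apply/esym/negbTE; rewrite -leNgt.
    by apply: le_trans (Hy kltm) _; rewrite ler_nat ltnW.
  - by move=> _; exact: Hy kltm.
have km' : k = m by apply/eqP; rewrite eqn_leq km kgem.
subst k.
case: (ltP (m%:R) y)%R => hy.
  exists m.+1; split => //; last by rewrite ltnn.
  move=> p; rewrite ltnS leq_eqVlt => /orP[/eqP ->|pm]; first by rewrite eqxx hy.
  by rewrite pm orbT -Hk.
exists m; split => //.
move=> p; rewrite ltnS leq_eqVlt => /orP[/eqP ->|pm]; last exact: Hk.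
by rewrite ltnn; apply/esym/negbTE; rewrite -leNgt.
Qed.

Section Link.
Variables (R : realType) (V : finType) (e : rel V).

Lemma prefix_Pre (U : {set V}) (p : {perm V}) (d : R) k :
  (forall q, q < #|U| -> (q < k) = (q%:R < d * #|U|%:R)%R) ->
  Defs.prefix U p d = Pre U p k.
Proof.
move=> Hk; apply/setP => z; rewrite inPre inE.
case zU: (z \in U) => //=; rewrite Hk //; exact: cnt_ltm.
Qed.

Lemma round_Ls (U : {set V}) (p : {perm V}) (d : R) k :
  (forall q, q < #|U| -> (q < k) = (q%:R < d * #|U|%:R)%R) ->
  round_step e p d U = Ls e U p k.
Proof. by move=> Hk; rewrite /round_step (prefix_Pre p Hk). Qed.

Lemma round_sub (p : {perm V}) (d : R) U : round_step e p d U \subset U.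
Proof. by apply/subsetP => z; rewrite /round_step inE => /andP[]. Qed.

Lemma rem_decr (p : {perm V}) (delta : nat -> {set V} -> R) j j' : j <= j' ->
  remaining e p delta j' \subset remaining e p delta j.
Proof.
move=> /subnK <-; elim: (j' - j) => [|n IH]; first by rewrite add0n.
by apply: subset_trans IH; rewrite addSn /=; apply: round_sub.
Qed.

Lemma round_inv (p r : {perm V}) (d : R) (X Y : {set V}) :
  perm_on Y r -> Y \subset round_step e p d X ->
  round_step e (r * p)%g d X = round_step e p d X.
Proof.
move=> ron YX.
have YX' : Y \subset X := subset_trans YX (round_sub _ _ _).
have ronX : perm_on X r := subset_trans ron YX'.
have YP z : z \in Y -> z \notin Defs.prefix X p d.
  by move=> /(subsetP YX); rewrite /round_step in_setD in_setU negb_or => /andP[/andP[]].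
have key z : (z \in Defs.prefix X (r * p)%g d) = (r z \in Defs.prefix X p d).
  rewrite inE [in RHS]inE (perm_closed _ ronX).
  have -> : #|[set u in X | rank (r * p)%g u < rank (r * p)%g z]| = cnt X p (r z).
    exact: cnt_mul.
  by [].
have EP : Defs.prefix X (r * p)%g d = Defs.prefix X p d.
  apply/setP => z; rewrite key.
  case zY: (z \in Y); last by rewrite (out_perm ron) ?zY.
  have rzY : r z \in Y by rewrite perm_closed.
  by rewrite (negbTE (YP _ rzY)) (negbTE (YP _ zY)).
rewrite /round_step EP; congr (_ :\: (_ :|: nbrs_set e _)).
apply: lfmis_ext => z zP; rewrite rank_mul (out_perm ron) //.
by apply: contraTN zP => zY; apply: YP.
Qed.


Lemma rem_inv (p r : {perm V}) (delta : nat -> {set V} -> R) j0 :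
  perm_on (remaining e p delta j0) r -> forall j, j <= j0 ->
  remaining e (r * p)%g delta j = remaining e p delta j.
Proof.
move=> ron; elim => [|j IH] jj0 //=.
rewrite IH ?(ltnW jj0) //; apply: (round_inv ron).
by have := rem_decr p delta jj0.
Qed.

Hypothesis esym : symmetric e.

Lemma per_pi (pi : {perm V}) (U : {set V}) (d thr : R) :
  (0 <= thr)%R -> (d <= 1)%R ->
  (#|[set r in SU U | ~~ [forall v in round_step e (r * pi)%g d U,
      ((deg_in e (round_step e (r * pi)%g d U) v)%:R <= thr)%R]]|%:R
   <= #|V|%:R * #|SU U|%:R * expR (- (thr * d)) :> R)%R.
Proof.
move=> thr0 d1.
have rhs0 : (0 <= #|V|%:R * #|SU U|%:R * expR (- (thr * d)) :> R)%R.
  by apply: mulr_ge0; [apply: mulr_ge0|apply: ltW; apply: expR_gt0].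
case: (posnP #|U|) => [U0|m0].
  apply: le_trans _ rhs0; rewrite -[X in (_ <= X)%R](mulr0n 1) ler_nat leqn0 cards_eq0; apply/eqP/setP => r.
  rewrite inE [in RHS]inE; apply/negbTE; rewrite negb_and negbK; apply/orP; right.
  apply/forall_inP => z zR; move: (subsetP (round_sub (r * pi)%g d U) _ zR).
  by move/eqP: U0; rewrite cards_eq0 => /eqP ->; rewrite inE.
have [k [km Hk Hy]] := prefix_k (d * #|U|%:R)%R #|U|.
have RL p : round_step e p d U = Ls e U p k by apply: round_Ls.
have ub := @union_bound _ _ [set r in SU U | ~~ [forall v in round_step e (r * pi)%g d U,
      ((deg_in e (round_step e (r * pi)%g d U) v)%:R <= thr)%R]]
   (fun v => Eset e pi U v thr k).
have ub' : #|[set r in SU U | ~~ [forall v in round_step e (r * pi)%g d U,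
      ((deg_in e (round_step e (r * pi)%g d U) v)%:R <= thr)%R]]| <=
      \sum_v #|Eset e pi U v thr k|.
  apply: ub => r; rewrite inE => /andP[rS /forall_inPn [v vR hv]].
  exists v; rewrite inEset rS -RL vR /=.
  by rewrite ltNge.
apply: le_trans (_ : (\sum_(v : V) #|Eset e pi U v thr k|%:R <= _)%R).
  by rewrite -natr_sum ler_nat.
have kd : (d * #|U|%:R <= k%:R :> R)%R.
  case: (ltnP k #|U|) => [kl|kg]; first exact: Hy.
  have -> : k = #|U| by apply/eqP; rewrite eqn_leq km kg.
  by rewrite -[X in (_ <= X)%R]mul1r ler_wpM2r.
have ex : (expR (- (thr / #|U|%:R) * k%:R) <= expR (- (thr * d)) :> R)%R.
  rewrite ler_expR mulNr lerN2 mulrAC ler_pdivlMr ?ltr0n // -mulrA.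
  by rewrite ler_wpM2l.
apply: (le_trans (y := (\sum_(v : V) (#|SU U|%:R * expR (- (thr * d))) : R)%R)).
  apply: ler_sum => v _; apply: le_trans (E_iter esym pi v thr0 km) _.
  by apply: ler_wpM2l => //; rewrite ler0n.
by rewrite sumr_const -[X in (_ <= X)%R]mulrA [X in (_ <= X)%R]mulrC mulr_natr.
Qed.

End Link.


Lemma card_part (T J : finType) (B : {set T}) (f : T -> J) :
  #|B| = \sum_j #|[set x in B | f x == j]|.
Proof.
under eq_bigr => j _ do rewrite card_sum_bool.
rewrite exchange_big /= -sum1_card; apply: eq_bigr => x _.
rewrite (bigD1 (f x)) //= eqxx big1 // => j; rewrite eq_sym => /negbTE ->.
by [].
Qed.

Section Main.
Variables (R : realType) (V : finType) (e : rel V).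
Hypothesis esym : symmetric e.
Variables (delta : nat -> {set V} -> R) (i' : nat) (U : {set V}).

Definition Aset := [set pi : {perm V} | remaining e pi delta i' == U].

Lemma Ainv r pi : r \in SU U -> ((r * pi)%g \in Aset) = (pi \in Aset).
Proof.
rewrite !inE => ron; apply/eqP/eqP => H.
  have ron' : perm_on (remaining e (r * pi)%g delta i') r^-1%g by rewrite H perm_onV.
  by rewrite -H -(rem_inv ron' (leqnn _)) mulgA mulVg mul1g.
by rewrite (rem_inv (p := pi) (j0 := i')) ?H.
Qed.

Lemma dcount (B : {set {perm V}}) :
  #|SU U| * #|[set pi in B | remaining e pi delta i' == U]| =
  \sum_(pi in Aset) #|[set r in SU U | (r * pi)%g \in B]|.
Proof.
under [RHS]eq_bigr => pi _ do rewrite card_sum_bool.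
rewrite exchange_big /= -sum_nat_const; apply: eq_bigr => r rS.
rewrite -card_sum_bool.
rewrite -[RHS](card_imset _ (mulgI r)); apply: eq_card => x.
rewrite !inE; apply/andP/imsetP => [[xB /eqP xU]|[pi]].
  exists (r^-1 * x)%g; last by rewrite mulgA mulgV mul1g.
  rewrite inE -(Ainv _ rS) mulgA mulgV mul1g xB andbT inE xU //.
rewrite inE => /andP[piA rpB] ->; rewrite rpB /=.
by have := Ainv pi rS; rewrite piA !inE => ->.
Qed.

End Main.


Lemma final_eq (R : realType) (n c' : nat) : 0 < n ->
  (n%:R * expR (- ((c'.+1)%:R * ln (n%:R : R))) = (n%:R ^+ c')^-1 :> R)%R.
Proof.
move=> n0.
have np : ((n%:R : R) \in Num.pos)%R by rewrite posrE ltr0n.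
rewrite -mulrN expRM_natl expRN (lnK np) exprS mulrA mulfV ?mul1r ?exprVn //.
by rewrite pnatr_eq0 -lt0n.
Qed.

Lemma thr_delta (R : realType) (c L D p d : R) : (0 < D)%R -> (0 < p)%R ->
  (c * p * L / D <= d)%R -> (c * L <= D / p * d)%R.
Proof.
move=> D0 p0 h; apply: le_trans (_ : D / p * (c * p * L / D) <= _)%R.
  by rewrite le_eqVlt; apply/orP; left; apply/eqP; field; apply/andP; split;
     apply: lt0r_neq0.
by apply: ler_wpM2l => //; apply: divr_ge0; apply: ltW.
Qed.

Theorem corollary2 (R : realType) :
  forall c' : nat, exists c : R, (0 < c)%R /\
  forall (V : finType) (e : rel V) (Delta : nat),
    simple_graph e ->
    (forall v : V, deg_in e finset.setT v <= Delta) ->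
    forall (i : nat) (delta : nat -> {set V} -> R),
      (forall (j : nat) (U : {set V}), 1 <= j <= i ->
         (0 < delta j U)%R /\ (delta j U <= 1)%R /\
         (c * 2%:R ^+ j * ln (#|V|%:R : R) / (Delta%:R : R) <= delta j U)%R) ->
      (((#|[set pi : {perm V} | ~~ [forall v in remaining e pi delta i,
              ((deg_in e (remaining e pi delta i) v)%:R
                 <= (Delta%:R : R) / 2%:R ^+ i)%R]]|)%:R : R)
        <= (#|[set: {perm V}]|)%:R / (#|V|%:R) ^+ c')%R.
Proof.
move=> c'; exists ((c'.+1)%:R)%R; split; first by rewrite ltr0n.
move=> V e Delta [esym eirr] Hdeg i delta Hd.
set thr : R := ((Delta%:R : R) / 2%:R ^+ i)%R.
set B := [set pi : {perm V} | _].
have p2 : (0 < (2%:R : R) ^+ i)%R by apply: exprn_gt0; rewrite ltr0n.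
have thr0 : (0 <= thr)%R by apply: divr_ge0 => //; apply: ltW.
have rhs0 : (0 <= #|[set: {perm V}]|%:R / (#|V|%:R : R) ^+ c')%R.
  by apply: divr_ge0 => //; apply: exprn_ge0.
case: (set_0Vmem B) => [->|[pi0 pi0B]]; first by rewrite cards0.
move: (pi0B); rewrite inE => /forall_inPn [v0 v0R hv0].
have dle : deg_in e (remaining e pi0 delta i) v0 <= Delta.
  apply: leq_trans (Hdeg v0); apply: subset_leq_card; apply/subsetP => z.
  by rewrite !innbin inE => /andP[_ ->].
have D0 : 0 < Delta.
  rewrite lt0n; apply/negP => /eqP D0; move: hv0; rewrite /thr D0 mul0r.
  by move: dle; rewrite D0 leqn0 => /eqP ->; rewrite lexx.
case: i Hd @thr @B pi0B v0R hv0 dle p2 thr0 => [|i'] Hd thr B pi0B v0R hv0 dle p2 thr0.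
  by move: hv0; rewrite /thr expr0 divr1 ler_nat dle.
have n0 : 0 < #|V| by apply/card_gt0P; exists v0.
set c : R := ((c'.+1)%:R)%R.
set eps := (#|V|%:R * expR (- (c * ln (#|V|%:R : R))) : R)%R.
suff main : (#|B|%:R <= #|[set: {perm V}]|%:R * eps :> R)%R.
  by apply: le_trans main _; rewrite /eps final_eq.
rewrite (card_part B (fun pi => remaining e pi delta i')).
rewrite (card_part [set: {perm V}] (fun pi => remaining e pi delta i')).
rewrite !natr_sum mulr_suml; apply: ler_sum => U _.
have AE : #|[set x in [set: {perm V}] | remaining e x delta i' == U]| = #|Aset e delta i' U|.
  by apply: eq_card => x; rewrite !inE.
rewrite AE.
set s := #|SU U|.
have s0 : 0 < s by apply/card_gt0P; exists 1%g; rewrite inE perm_on1.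
have dc := @dcount _ _ e delta i' U B.
set d := delta i'.+1 U.
have [d0 [d1 dh]] := Hd i'.+1 U (leqnn _).
have cl : (c * ln (#|V|%:R : R) <= thr * d)%R.
  by apply: thr_delta => //; rewrite ltr0n.
have per pi : pi \in Aset e delta i' U ->
    (#|[set r in SU U | (r * pi)%g \in B]|%:R <=
     #|V|%:R * s%:R * expR (- (c * ln (#|V|%:R : R))) :> R)%R.
  move=> piA.
  have -> : [set r in SU U | (r * pi)%g \in B] = [set r in SU U | ~~ [forall v in
      round_step e (r * pi)%g d U,
      ((deg_in e (round_step e (r * pi)%g d U) v)%:R <= thr)%R]].
    apply/setP => r; rewrite [in LHS]inE [in RHS]inE; case rS: (r \in SU U) => //=.
    have HU : remaining e (r * pi)%g delta i' = U.
      by have := @Ainv _ _ e delta i' U r pi rS; rewrite piA inE => /eqP.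
    rewrite /B inE.
    have -> : remaining e (r * pi)%g delta i'.+1 = round_step e (r * pi)%g d U.
      by rewrite /= HU.
    by [].
  apply: le_trans (per_pi esym pi U thr0 d1) _.
  apply: ler_wpM2l; first by apply: mulr_ge0; rewrite ler0n.
  by rewrite ler_expR lerN2.
have s0' : (0 < s%:R :> R)%R by rewrite ltr0n.
rewrite -(ler_pM2l s0') -natrM dc natr_sum.
apply: le_trans (_ : (\sum_(pi in Aset e delta i' U)
   (#|V|%:R * s%:R * expR (- (c * ln (#|V|%:R : R)))) <= _ :> R)%R).
  by apply: ler_sum => pi piA; apply: per.
rewrite sumr_const /eps -mulr_natl.
by rewrite le_eqVlt; apply/orP; left; apply/eqP; ring.
Qed.
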